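(* Let $T,S$ be bounded linear operators on a Banach space with $ST=\nu\,\mathrm{id}$ for some $\nu\in\mathbb C\setminus\{0\}$. Then for all $h\in\mathbb N$, \[(T+S)^h=\sum_{k=0}^{\lfloor h/2\rfloor}\alpha_{h,k}\,\nu^k\sum_{l=0}^{h-2k}T^lS^{\,h-2k-l},\qquad\alpha_{h,k}:=\binom hk-\binom h{k-1},\] with the convention $\binom h{-1}=0$ and $\alpha_{0,0}=1$.
   Context: $\mathbb N=\{0,1,2,\dots\}$; $T^0=S^0=\mathrm{id}$. *)

(* Defs.v *)
From HB Require Import structures.
From mathcomp Require Import all_boot all_order all_algebra.
From mathcomp Require Import complex.
From mathcomp Require Import all_classical all_reals all_analysis.
Set Implicit Arguments. Unset Strict Implicit. Unset Printing Implicit Defensive.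
Import Order.TTheory GRing.Theory Num.Theory.
Local Open Scope ring_scope.

Definition opow (V : Type) (n : nat) (f : V -> V) : V -> V := iter n f.

Definition alpha (K : pzRingType) (h k : nat) : K :=
  ('C(h, k))%:R - (if k is k'.+1 then ('C(h, k'))%:R else 0).

(* Main.v *)
Require Import Defs.
From HB Require Import structures.
From mathcomp Require Import all_boot all_order all_algebra.
From mathcomp Require Import complex.
From mathcomp Require Import all_classical all_reals all_analysis.
From mathcomp Require Import zify.
Import Order.TTheory GRing.Theory Num.Theory.
Local Open Scope ring_scope.

Definition Pm {K : comNzRingType} {V : lmodType K} (T S : V -> V) (x : V) (m : nat) : V :=
  \sum_(0 <= l < m.+1) opow l T (opow (m - l) S x).

Lemma LP {K : comNzRingType} {V : lmodType K} (T S : {linear V -> V}) (nu : K)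
  (hST : forall y, S (T y) = nu *: y) (x : V) (m : nat) :
  T (Pm T S x m) + S (Pm T S x m) =
  Pm T S x m.+1 + (if m is m'.+1 then nu *: Pm T S x m' else 0).
Proof.
rewrite /Pm !raddf_sum /=.
rewrite (big_nat_recl m.+1) // (big_nat_recl m 0 (fun i => S _)) //=.
rewrite subn0 /=.
have -> : \sum_(0 <= i < m) S (opow i.+1 T (opow (m - i.+1) S x)) =
          \sum_(0 <= i < m) nu *: opow i T (opow (m - i.+1) S x).
  by apply: eq_bigr => i _; rewrite /opow iterS hST.
have -> : \sum_(0 <= i < m.+1) opow i.+1 T (opow (m.+1 - i.+1) S x) =
          \sum_(0 <= i < m.+1) T (opow i T (opow (m - i) S x)).
  by apply: eq_bigr => i _; rewrite subSS /opow iterS.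
case: m => [|m].
  by rewrite [\sum_(0 <= i < 0) _]big_geq // !addr0 addrC.
have -> : \sum_(0 <= i < m.+1) nu *: opow i T (opow (m.+1 - i.+1) S x) =
          \sum_(0 <= i < m.+1) nu *: opow i T (opow (m - i) S x).
  by apply: eq_bigr => i _; rewrite subSS.
rewrite -scaler_sumr. by rewrite addrCA addrA.
Qed.

Lemma alpha_pascal (K : pzRingType) h k :
  alpha K h.+1 k.+1 = alpha K h k.+1 + alpha K h k.
Proof.
rewrite /alpha; case: k => [|k].
  by rewrite !binS !bin0 natrD addrK subr0 subrK.
rewrite binS [in X in _ - X]binS !natrD.
set a := 'C(h, k.+1)%:R; set b := 'C(h, k.+2)%:R; set c := 'C(h, k)%:R.
by rewrite addrA subrK opprD addrA addrK.
Qed.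

Lemma alpha0 (K : pzRingType) h : alpha K h 0 = 1.
Proof. by rewrite /alpha bin0 subr0. Qed.

Lemma alpha_mid (K : pzRingType) h k : (2 * k = h.+1)%N -> alpha K h k = 0.
Proof.
case: k => [|k] Hk; first by [].
rewrite /alpha -(@bin_sub h k.+1); last by lia.
have -> : (h - k.+1 = k)%N by lia.
by rewrite subrr.
Qed.

Lemma main_ind {K : comNzRingType} {V : lmodType K} (T S : {linear V -> V}) (nu : K)
  (hST : forall y, S (T y) = nu *: y) (x : V) (h : nat) :
  opow h (fun y => T y + S y) x =
  \sum_(0 <= k < h.+1) (if (2 * k <= h)%N then (alpha K h k * nu ^+ k) *: Pm T S x (h - 2 * k) else 0).
Proof.
elim: h => [|h IH].
  by rewrite big_nat1 /= alpha0 expr0 mulr1 scale1r /Pm big_nat1.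
rewrite /opow iterS -/(opow h _ x) IH !raddf_sum -big_split /=.
set A := fun k => if (2 * k <= h)%N then (alpha K h k * nu ^+ k) *: Pm T S x (h.+1 - 2 * k) else 0.
set B := fun k => if (2 * k + 1 <= h)%N then (alpha K h k * nu ^+ k.+1) *: Pm T S x (h.+1 - 2 * k.+1) else 0.
set A' := fun k => if (2 * k.+1 <= h.+1)%N then (alpha K h k.+1 * nu ^+ k.+1) *: Pm T S x (h.+1 - 2 * k.+1) else 0.
have E1 : forall k, T (if (2 * k <= h)%N then (alpha K h k * nu ^+ k) *: Pm T S x (h - 2 * k) else 0)
   + S (if (2 * k <= h)%N then (alpha K h k * nu ^+ k) *: Pm T S x (h - 2 * k) else 0) = A k + B k.
  move=> k; rewrite /A /B; case: ifP => Hk; last first.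
    by rewrite ifF; [rewrite !raddf0 !addr0 | apply/negbTE; lia].
  rewrite !linearZ -scalerDr (LP _ _ _ hST).
  have -> : (h - 2 * k).+1 = (h.+1 - 2 * k)%N by lia.
  case Hm: (h - 2 * k)%N => [|m].
    by rewrite ifF ?addr0 //; apply/negbTE; lia.
  rewrite ifT; last by lia.
  have -> : m = (h.+1 - 2 * k.+1)%N by lia.
  by rewrite scalerDr scalerA exprSr mulrA.
rewrite (eq_bigr _ (fun k _ => E1 k)) big_split /=.
rewrite (big_nat_recl h.+1) //.
have E2 : forall k, (if (2 * k.+1 <= h.+1)%N then (alpha K h.+1 k.+1 * nu ^+ k.+1) *: Pm T S x (h.+1 - 2 * k.+1) else 0) = A' k + B k.
  move=> k; rewrite /A' /B; case: ifP => Hk; last first.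
    by rewrite ifF ?addr0 //; apply/negbTE; lia.
  by rewrite ifT ?alpha_pascal ?mulrDl ?scalerDl //; lia.
rewrite (eq_bigr _ (fun k _ => E2 k)) big_split /= addrA; congr (_ + _).
rewrite (big_nat_recl h) // (big_nat_recr h) //= {2}/A' ifF; last by apply/negbTE; lia.
rewrite addr0 /A /= !alpha0 subn0; congr (_ + _).
apply: eq_big_nat => k Hk; rewrite /A'.
case: (ltngtP (2 * k.+1) h.+1) => Hc.
- by rewrite !ifT //; lia.
- by rewrite !ifF //; apply/negbTE; lia.
- by rewrite alpha_mid // mul0r scale0r; case: ifP.
Qed.

Theorem lemma3p1 (R : realType) (V : completeNormedModType R[i])
  (T S : {linear V -> V}) (hT : continuous T) (hS : continuous S)
  (nu : R[i]) (hnu : nu != 0) (hST : forall x : V, S (T x) = nu *: x)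
  (h : nat) (x : V) :
  opow h (fun y => T y + S y) x =
  \sum_(0 <= k < h./2.+1)
     (alpha _ h k * nu ^+ k) *:
       \sum_(0 <= l < (h - 2 * k).+1) opow l T (opow (h - 2 * k - l) S x).
Proof.
rewrite (main_ind T S nu hST x h).
have Hh : (h./2.+1 <= h.+1)%N by rewrite -divn2 ltnS leq_div.
rewrite (@big_cat_nat _ _ _ h./2.+1) /=; last by []; last by [].
have -> : \sum_(h./2.+1 <= k < h.+1)
   (if (2 * k <= h)%N then (alpha R[i] h k * nu ^+ k) *: Pm T S x (h - 2 * k) else 0) = 0.
  rewrite big_nat_cond big1 // => k /andP[/andP[H1 H2] _].
  rewrite ifF //; apply/negbTE; move: H1; rewrite -divn2; lia.
rewrite addr0; apply: eq_big_nat => k Hk.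
by rewrite ifT //; move: Hk; rewrite -divn2; lia.
Qed.
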